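(* Let $k\ge 0$. For every $k$-essential term $\alpha$ there exists a $k$-correct term $\alpha'$ equivalent to $\alpha$.
   Context: Let $\Sigma$ be a finite alphabet, $1\notin\Sigma$ a separator, $\Sigma_1=\Sigma\cup\{1\}$, $\mathrm{rk}(w)=|w|_1$ for $w\in\Sigma_1^*$; for $\mathrm{rk}(u)\ge j$, $u\odot_j v$ replaces the $j$-th occurrence of $1$ in $u$ by $v$; these operations extend elementwise to sets of words. Let $N$ be a set of nonterminals, each with a rank in $\mathbb{N}$. Terms (with ranks) are built from nonterminals (their rank), words of $\Sigma^*$ (rank $0$) and $1$ (rank $1$) by $(\alpha\cdot\beta)$ of rank $\mathrm{rk}\alpha+\mathrm{rk}\beta$ and $(\alpha\odot_j\beta)$, $j\ge1$, allowed when $\mathrm{rk}\alpha\ge j$, of rank $\mathrm{rk}\alpha+\mathrm{rk}\beta-1$. A term is $k$-correct if all its subterms have rank at most $k$; it is $k$-essential if its rank and the ranks of all nonterminals occurring in it are less than $k$. A ground multicontext is such an expression built additionally from ranked variables $x_1,\dots,x_t$ as leaves but without nonterminals; two ground multicontexts are equivalent if for every valuation $\mu$ assigning to each variable of rank $r$ a set of words of rank $r$, their values (with $\cdot$ as concatenation and $\odot_j$ as intercalation, elementwise) coincide. Two terms $\alpha_1,\alpha_2$ are equivalent if $\alpha_1=D_1[A_1,\dots,A_s]$ and $\alpha_2=D_2[A_1,\dots,A_s]$ for some nonterminals $A_1,\dots,A_s$ and equivalent ground multicontexts $D_1,D_2$ in variables $x_1,\dots,x_s$. *)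

(* Defs.v *)
From mathcomp Require Import all_boot.
Set Implicit Arguments. Unset Strict Implicit. Unset Printing Implicit Defensive.

Section Defs.
Variable Sigma : finType.

(* Words over Sigma_1 = Sigma + {1}; the separator 1 is encoded as None. *)
Definition word := seq (option Sigma).

Definition is_sep (x : option Sigma) : bool := if x is None then true else false.

Definition wrk (w : word) : nat := count is_sep w.

(* u (.)_j v : replace the j-th (1-based) occurrence of 1 in u by v. *)
Fixpoint ins (j : nat) (u v : word) : word :=
  match u with
  | [::] => [::]
  | None :: u' => if j == 1 then v ++ u' else None :: ins j.-1 u' v
  | Some a :: u' => Some a :: ins j u' v
  end.

(* Expressions with leaves in V: V = nonterminals gives terms,
   V = 'I_s (variables x_1..x_s) gives ground multicontexts. *)
Inductive expr (V : Type) : Type :=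
| ELeaf of V
| EWord of seq Sigma
| EOne
| ECat of expr V & expr V
| EIns of nat & expr V & expr V.

Section Generic.
Variables (V : Type) (rkV : V -> nat).

Fixpoint erk (e : expr V) : nat :=
  match e with
  | ELeaf A => rkV A
  | EWord _ => 0
  | EOne => 1
  | ECat a b => erk a + erk b
  | EIns _ a b => erk a + erk b - 1
  end.

Fixpoint ewf (e : expr V) : Prop :=
  match e with
  | ECat a b => ewf a /\ ewf b
  | EIns j a b => [/\ 1 <= j, j <= erk a, ewf a & ewf b]
  | _ => True
  end.

Fixpoint subranks_le (k : nat) (e : expr V) : Prop :=
  match e with
  | ECat a b => [/\ erk e <= k, subranks_le k a & subranks_le k b]
  | EIns _ a b => [/\ erk e <= k, subranks_le k a & subranks_le k b]
  | _ => erk e <= k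
  end.

Fixpoint leaves_rank_lt (k : nat) (e : expr V) : Prop :=
  match e with
  | ELeaf A => rkV A < k
  | ECat a b => leaves_rank_lt k a /\ leaves_rank_lt k b
  | EIns _ a b => leaves_rank_lt k a /\ leaves_rank_lt k b
  | _ => True
  end.

Fixpoint eval (mu : V -> word -> Prop) (e : expr V) : word -> Prop :=
  match e with
  | ELeaf x => mu x
  | EWord w => fun z => z = map Some w
  | EOne => fun z => z = [:: None]
  | ECat a b => fun z => exists u v, [/\ eval mu a u, eval mu b v & z = u ++ v]
  | EIns j a b => fun z => exists u v, [/\ eval mu a u, eval mu b v & z = ins j u v]
  end.
End Generic.

Fixpoint emap (V W : Type) (f : V -> W) (e : expr V) : expr W :=
  match e with
  | ELeaf x => ELeaf (f x)
  | EWord w => EWord _ w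
  | EOne => EOne _
  | ECat a b => ECat (emap f a) (emap f b)
  | EIns j a b => EIns j (emap f a) (emap f b)
  end.

Section Terms.
Variables (N : Type) (rkN : N -> nat).

Definition term := expr N.

Definition k_correct (k : nat) (t : term) : Prop :=
  ewf rkN t /\ subranks_le rkN k t.

Definition k_essential (k : nat) (t : term) : Prop :=
  [/\ ewf rkN t, erk rkN t < k & leaves_rank_lt rkN k t].

Definition gmc_equiv (s : nat) (rkx : 'I_s -> nat) (D1 D2 : expr 'I_s) : Prop :=
  ewf rkx D1 /\ ewf rkx D2 /\
  forall mu : 'I_s -> word -> Prop,
    (forall i w, mu i w -> wrk w = rkx i) ->
    forall z, eval mu D1 z <-> eval mu D2 z.

Definition term_equiv (a1 a2 : term) : Prop :=
  exists (s : nat) (A : 'I_s -> N) (D1 D2 : expr 'I_s),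
    [/\ a1 = emap A D1, a2 = emap A D2 & gmc_equiv (fun i => rkN (A i)) D1 D2].
End Terms.
End Defs.

(* Main.v *)
Require Import Defs.
From mathcomp Require Import all_boot.
From mathcomp Require Import zify.
Set Implicit Arguments. Unset Strict Implicit. Unset Printing Implicit Defensive.

Section Words.
Variable Sigma : finType.
Notation word := (word Sigma).

Lemma wrk_cat (u v : word) : wrk (u ++ v) = wrk u + wrk v.
Proof. by rewrite /wrk count_cat. Qed.

Lemma wrk_cons_None (u : word) : wrk (None :: u) = (wrk u).+1.
Proof. by []. Qed.

Lemma wrk_cons_Some a (u : word) : wrk (Some a :: u) = wrk u.
Proof. by []. Qed.

Lemma ins_rk j (u v : word) : 1 <= j <= wrk u -> wrk (ins j u v) = wrk u + wrk v - 1.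
Proof.
elim: u j => [|x u IH] j; [|case: x => [a|]] => /=.
- rewrite /wrk /=; lia.
- move=> Hj. by apply: IH.
- case: eqP => [->|Hj1] Hj.
  + rewrite wrk_cat; lia.
  + rewrite wrk_cons_None IH; lia.
Qed.

Lemma ins0 (u v : word) : ins 0 u v = u.
Proof. by elim: u => [|x u IH]; [|case: x => [a|]] => //=; rewrite IH. Qed.

Lemma ins_catl j (u u' v : word) : j <= wrk u -> ins j (u ++ u') v = ins j u v ++ u'.
Proof.
elim: u j => [|x u IH] j; [|case: x => [a|]] => /=.
- by case: j => // _; rewrite ins0.
- by move=> Hj; rewrite IH.
- case: eqP => [->|Hj1] Hj; first by rewrite catA.
  rewrite IH //. lia.
Qed.

Lemma ins_catr j (u u' v : word) : wrk u < j -> ins j (u ++ u') v = u ++ ins (j - wrk u) u' v.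
Proof.
elim: u j => [|x u IH] j; [|case: x => [a|]] => /=.
- by rewrite subn0.
- by move=> Hj; rewrite IH.
- move=> Hj. have ->: (j == 1) = false by apply/eqP; lia.
  case: j Hj => [|j] Hj //=. rewrite IH; last lia. do 2 f_equal. 
Qed.

Fixpoint ofill (u : word) (os : seq (option word)) : word :=
  match u with
  | [::] => [::]
  | Some a :: u' => Some a :: ofill u' os
  | None :: u' =>
    match os with
    | [::] => None :: ofill u' [::]
    | o :: os' => (if o is Some v then v else [:: None]) ++ ofill u' os'
    end
  end.

Lemma ofill0 (u : word) : ofill u [::] = u.
Proof. by elim: u => [|x u IH]; [|case: x => [a|]] => //=; rewrite IH. Qed.

Lemma ofill_nseq (u : word) n : ofill u (nseq n None) = u.
Proof.
elim: u n => [|x u IH] n; [|case: x => [a|]] => //=; [by rewrite IH|case: n => [|n] /=; by rewrite ?ofill0 ?IH].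
Qed.

Lemma nseqS_cat T (x : T) n s : nseq n.+1 x ++ s = nseq n x ++ x :: s.
Proof. by elim: n => //= n ->. Qed.

Lemma ins_ofill n (u v : word) os : n < wrk u ->
  ins n.+1 (ofill u (nseq n.+1 None ++ os)) v = ofill u (nseq n None ++ Some v :: os).
Proof.
elim: u n => [|x u IH] n ; [|case: x => [a|]] => //=.
- by move=> H; rewrite IH.
- move=> H. case: n H => [|n] H /=; first by [].
  rewrite IH //; lia.
Qed.

Lemma ofill_nosep (v u : word) os : wrk v = 0 -> ofill (v ++ u) os = v ++ ofill u os.
Proof.
elim: v => [|[a|] v IH] //=.
- by move=> H; rewrite IH.
Qed.

Fixpoint merge (o1 o2 : seq (option word)) : seq (option word) :=
  match o1, o2 with
  | [::], _ => o2
  | Some v :: o1', _ => Some v :: merge o1' o2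
  | None :: o1', [::] => None :: merge o1' [::]
  | None :: o1', o :: o2' => o :: merge o1' o2'
  end.

Lemma ofill_merge (u : word) o1 o2 :
  (forall v, Some v \in o1 -> wrk v = 0) ->
  ofill (ofill u o1) o2 = ofill u (merge o1 o2).
Proof.
elim: u o1 o2 => [|x u IH] o1 o2 H; [|case: x => [a|]] => //=.
- by rewrite IH.
- case: o1 H => [|[v|] o1] H /=.
  + by rewrite !ofill0.
  + rewrite ofill_nosep; last by apply: H; rewrite inE eqxx.
    rewrite IH // => w Hw; apply: H; by rewrite inE Hw orbT.
  + have H' : forall v, Some v \in o1 -> wrk v = 0.
      by move=> w Hw; apply: H; rewrite inE Hw orbT.
    case: o2 => [|o o2] /=.
    * by rewrite IH.
    * by rewrite IH.
Qed.

Fixpoint insW j (vs : seq word) (w : word) : seq word :=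
  match vs with
  | [::] => [::]
  | v :: vs' => if j <= wrk v then ins j v w :: vs' else v :: insW (j - wrk v) vs' w
  end.

Lemma ins_fill j (u w : word) vs : count_mem None u = size vs ->
  ins j (ofill u (map Some vs)) w = ofill u (map Some (insW j vs w)).
Proof.
elim: u j vs => [|x u IH] j vs ; [|case: x => [a|]] => //=.
- by move=> H; rewrite IH.
- case: vs => [|v vs] //= [] H.
  case: ifP => Hj /=.
  + by rewrite ins_catl.
  + rewrite ins_catr; last by lia. by rewrite IH.
Qed.

Lemma wrk_fill (u : word) vs : count_mem None u = size vs ->
  wrk (ofill u (map Some vs)) = sumn (map (@wrk _) vs).
Proof.
elim: u vs => [|x u IH] vs ; [|case: x => [a|]] => //=.
- by case: vs.
- by move=> H; rewrite IH.
- case: vs => [|v vs] //= [] H. by rewrite wrk_cat IH.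
Qed.

End Words.

Section MK.
Variables (Sigma : finType) (V : Type) (rkV : V -> nat).
Notation word := (word Sigma).
Notation expr := (expr Sigma V).

Definition okmu (mu : V -> word -> Prop) := forall x w, mu x w -> wrk w = rkV x.

Lemma eval_rk mu (e : expr) z : okmu mu -> ewf rkV e -> eval mu e z -> wrk z = erk rkV e.
Proof.
move=> Hmu; elim: e z => [x|w||a IHa b IHb|j a IHa b IHb] z /=.
- by move=> _ /Hmu.
- move=> _ ->. by rewrite /wrk count_map; elim: w.
- by move=> _ ->.
- move=> [Ha Hb] [u [v [Hu Hv ->]]]. by rewrite wrk_cat (IHa u) // (IHb v).
- move=> [Hj1 Hj2 Ha Hb] [u [v [Hu Hv ->]]].
  have Hu' := IHa u Ha Hu; have Hv' := IHb v Hb Hv.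
  rewrite ins_rk Hu' ?Hv' //; lia.
Qed.

Fixpoint mk1 (c : expr) (j : nat) (os : seq (option expr)) : expr :=
  match os with
  | [::] => c
  | Some e :: os' => EIns j (mk1 c j.+1 os') e
  | None :: os' => mk1 c j.+1 os'
  end.

Definition og (o : option expr) := if o is Some e then erk rkV e else 1.

Lemma erk_mk1 c n os : n + size os <= erk rkV c ->
  erk rkV (mk1 c n.+1 os) = erk rkV c - size os + sumn (map og os).
Proof.
elim: os n => [|[e|] os IH] n /= H.
- by rewrite subn0 addn0.
- rewrite IH; last lia. rewrite /og /=. lia.
- rewrite IH; last lia. rewrite /og /=. lia.
Qed.

Fixpoint allO (P : expr -> Prop) (os : seq (option expr)) : Prop :=
  match os with
  | [::] => True
  | Some e :: os' => P e /\ allO P os'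
  | None :: os' => allO P os'
  end.

Lemma ewf_mk1 c n os : ewf rkV c -> allO (ewf rkV) os -> n + size os <= erk rkV c ->
  ewf rkV (mk1 c n.+1 os).
Proof.
elim: os n => [|[e|] os IH] n //= Hc.
- move=> [He Ho] H. split => //.
  + rewrite erk_mk1; last lia. lia.
  + apply: IH => //; lia.
- move=> Ho H; apply: IH => //; lia.
Qed.

Lemma sub_mk1 K c n os : subranks_le rkV K c -> allO (subranks_le rkV K) os ->
  n + size os <= erk rkV c ->
  (forall i, i < size os -> erk rkV c - size (drop i os) + sumn (map og (drop i os)) <= K) ->
  subranks_le rkV K (mk1 c n.+1 os).
Proof.
elim: os n => [|[e|] os IH] n //= Hc.
- move=> [He Ho] H Hi. split => //.
  + rewrite erk_mk1; last lia. have := Hi 0 isT. rewrite drop0 /= /og /=. lia.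
  + apply: IH => //; first lia. move=> i Hi'. exact: (Hi i.+1).
- move=> Ho H Hi; apply: IH => //; first lia. move=> i Hi'. exact: (Hi i.+1).
Qed.

Fixpoint orel (R : expr -> word -> Prop) (os : seq (option expr)) (ovs : seq (option word)) : Prop :=
  match os, ovs with
  | [::], [::] => True
  | None :: os', None :: ovs' => orel R os' ovs'
  | Some e :: os', Some v :: ovs' => R e v /\ orel R os' ovs'
  | _, _ => False
  end.

Lemma eval_mk1 mu c n os z :
  (forall u, eval mu c u -> n + size os <= wrk u) ->
  eval mu (mk1 c n.+1 os) z <->
  exists u ovs, [/\ eval mu c u, orel (eval mu) os ovs & z = ofill u (nseq n None ++ ovs)].
Proof.
elim: os n z => [|[e|] os IH] n z /= Hc.
- split.
  + move=> Hz; exists z, [::]; split => //. by rewrite cats0 ofill_nseq.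
  + by move=> [u [[|v ovs] [Hu Ho ->]]] //; rewrite cats0 ofill_nseq.
- split.
  + move=> [w [v [Hw Hv ->]]].
    have Hc' : forall u, eval mu c u -> n.+1 + size os <= wrk u.
      by move=> u /Hc; lia.
    move/(IH _ _ Hc'): Hw => [u [ovs [Hu Ho ->]]].
    exists u, (Some v :: ovs); split => //.
    rewrite ins_ofill //. have := Hc _ Hu; lia.
  + move=> [u [[|[v|] ovs] [Hu //= [Hv Ho] ->]]].
    have Hc' : forall u, eval mu c u -> n.+1 + size os <= wrk u.
      by move=> u' /Hc; lia.
    exists (ofill u (nseq n.+1 None ++ ovs)), v; split => //.
    * apply/(IH _ _ Hc'). by exists u, ovs.
    * rewrite ins_ofill //. have := Hc _ Hu; lia.
- have Hc' : forall u, eval mu c u -> n.+1 + size os <= wrk u.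
    by move=> u' /Hc; lia.
  rewrite (IH _ _ Hc'). split.
  + move=> [u [ovs [Hu Ho ->]]]. exists u, (None :: ovs); split => //.
    by rewrite -(nseqS_cat None n ovs).
  + move=> [u [[|[v|] ovs] [Hu //= Ho ->]]]. exists u, ovs; split => //.
    by rewrite -(nseqS_cat None n ovs).
Qed.

End MK.

Section NF.
Variables (Sigma : finType) (V : Type) (rkV : V -> nat).
Notation word := (word Sigma).
Notation expr := (expr Sigma V).

Inductive nf := NW of seq Sigma | NOne | NCat of nf & nf | NX of V & seq nf.

Fixpoint allP (P : nf -> Prop) (l : seq nf) : Prop :=
  match l with [::] => True | a :: l' => P a /\ allP P l' end.

Definition nf_ind2 (P : nf -> Prop)
  (HW : forall w, P (NW w)) (H1 : P NOne) (HC : forall a b, P a -> P b -> P (NCat a b))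
  (HX : forall x args, allP P args -> P (NX x args)) : forall n, P n :=
  fix F n := match n return P n with
  | NW w => HW w | NOne => H1 | NCat a b => HC a b (F a) (F b)
  | NX x args => HX x args ((fix G l := match l return allP P l with
                   [::] => I | a :: l' => conj (F a) (G l') end) args)
  end.

Fixpoint nrk (n : nf) : nat :=
  match n with
  | NW _ => 0 | NOne => 1 | NCat a b => nrk a + nrk b
  | NX x args => sumn (map nrk args)
  end.

Fixpoint nwf (n : nf) : Prop :=
  match n with
  | NCat a b => nwf a /\ nwf b
  | NX x args => size args = rkV x /\ allP nwf args
  | _ => True
  end.

Fixpoint nleaves (K : nat) (n : nf) : Prop :=
  match n with
  | NCat a b => nleaves K a /\ nleaves K b
  | NX x args => rkV x <= K /\ allP (nleaves K) args
  | _ => True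
  end.

Fixpoint rel2 (R : nf -> word -> Prop) (args : seq nf) (vs : seq word) : Prop :=
  match args, vs with
  | [::], [::] => True
  | a :: args', v :: vs' => R a v /\ rel2 R args' vs'
  | _, _ => False
  end.

Fixpoint evalN (mu : V -> word -> Prop) (n : nf) : word -> Prop :=
  match n with
  | NW w => fun z => z = map Some w
  | NOne => fun z => z = [:: None]
  | NCat a b => fun z => exists u v, [/\ evalN mu a u, evalN mu b v & z = u ++ v]
  | NX x args => fun z => exists u vs, [/\ mu x u, rel2 (evalN mu) args vs & z = ofill u (map Some vs)]
  end.

Fixpoint insA (f : nat -> nf -> nf -> nf) (j : nat) (args : seq nf) (w : nf) : seq nf :=
  match args with
  | [::] => [::]
  | a :: l => if j <= nrk a then f j a w :: l else a :: insA f (j - nrk a) l w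
  end.

Fixpoint ninsert (j : nat) (n w : nf) : nf :=
  match n with
  | NW _ => n
  | NOne => w
  | NCat a b => if j <= nrk a then NCat (ninsert j a w) b else NCat a (ninsert (j - nrk a) b w)
  | NX x args => NX x (insA ninsert j args w)
  end.

Fixpoint nf_of (e : expr) : nf :=
  match e with
  | ELeaf x => NX x (nseq (rkV x) NOne)
  | EWord w => NW w
  | EOne => NOne
  | ECat a b => NCat (nf_of a) (nf_of b)
  | EIns j a b => ninsert j (nf_of a) (nf_of b)
  end.

Fixpoint real (n : nf) : expr :=
  match n with
  | NW w => @EWord Sigma V w
  | NOne => @EOne Sigma V
  | NCat a b => ECat (real a) (real b)
  | NX x args =>
    mk1 (mk1 (@ELeaf Sigma V x) 1
           (map (fun a => if nrk a == 0 then Some (real a) else None) args)) 1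
        (map Some (pmap id (map (fun a => if nrk a == 0 then None else Some (real a)) args)))
  end.


Lemma size_insA f j args w : size (insA f j args w) = size args.
Proof. by elim: args j => [|a l IH] j //=; case: ifP => _ /=; rewrite ?IH. Qed.

Lemma nrk_ninsert w : forall n j, 1 <= j <= nrk n -> nrk (ninsert j n w) = nrk n + nrk w - 1.
Proof.
elim/nf_ind2 => [s||a b IHa IHb|x args IH] j //=.
- lia.
- move=> _; lia.
- case: ifP => Hj H /=.
  + rewrite IHa; lia.
  + rewrite IHb; lia.
- elim: args j IH => [|a l IHl] j /=; first lia.
  move=> [Ha Hl] H. case: ifP => Hj /=.
  + rewrite Ha; lia.
  + rewrite IHl //; lia.
Qed.

Lemma nwf_ninsert w : nwf w -> forall n j, nwf n -> nwf (ninsert j n w).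
Proof.
move=> Hw; elim/nf_ind2 => [s||a b IHa IHb|x args IH] j //=.
- by move=> [Ha Hb]; case: ifP => _ /=; split; auto.
- move=> [Hs Ha]; split; first by rewrite size_insA.
  elim: args j {Hs} IH Ha => [|a l IHl] j //= [Ha Hl] [Ha' Hl'].
  by case: ifP => _ /=; split; auto.
Qed.

Lemma nleaves_ninsert K w : nleaves K w -> forall n j, nleaves K n -> nleaves K (ninsert j n w).
Proof.
move=> Hw; elim/nf_ind2 => [s||a b IHa IHb|x args IH] j //=.
- by move=> [Ha Hb]; case: ifP => _ /=; split; auto.
- move=> [Hs Ha]; split => //.
  elim: args j {Hs} IH Ha => [|a l IHl] j //= [Ha Hl] [Ha' Hl'].
  by case: ifP => _ /=; split; auto.
Qed.

Lemma sumn_nseq_None r : sumn (map nrk (nseq r NOne)) = r.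
Proof. by elim: r => //= r ->; rewrite add1n. Qed.

Lemma nrk_nf (e : expr) : ewf rkV e -> nrk (nf_of e) = erk rkV e.
Proof.
elim: e => [x|s||a IHa b IHb|j a IHa b IHb] //=.
- by rewrite sumn_nseq_None.
- by move=> [Ha Hb]; rewrite IHa ?IHb.
- move=> [Hj1 Hj2 Ha Hb]. rewrite nrk_ninsert IHa ?IHb //. by rewrite Hj1 Hj2.
Qed.

Lemma nwf_nf (e : expr) : nwf (nf_of e).
Proof.
elim: e => [x|s||a IHa b IHb|j a IHa b IHb] //=.
- split; first by rewrite size_nseq. by elim: (rkV x).
- exact: nwf_ninsert.
Qed.

Lemma nleaves_nf k (e : expr) : leaves_rank_lt rkV k e -> nleaves k (nf_of e).
Proof.
elim: e => [x|s||a IHa b IHb|j a IHa b IHb] //=.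
- move=> H; split; first exact: ltnW. by elim: (rkV x).
- by move=> [Ha Hb]; split; auto.
- move=> [Ha Hb]. apply: nleaves_ninsert; auto.
Qed.

Lemma count_None (u : word) : count_mem None u = wrk u.
Proof. by rewrite /wrk; apply: eq_count => -[]. Qed.

Lemma rel2_size R args vs : rel2 R args vs -> size vs = size args.
Proof. by elim: args vs => [|a l IH] [|v vs] //= [_ /IH ->]. Qed.

Lemma evalN_rk mu : okmu rkV mu -> forall n z, nwf n -> evalN mu n z -> wrk z = nrk n.
Proof.
move=> Hmu; elim/nf_ind2 => [s||a b IHa IHb|x args IH] z /=.
- move=> _ ->. by rewrite /wrk count_map; elim: s.
- by move=> _ ->.
- move=> [Ha Hb] [u [v [Hu Hv ->]]]. by rewrite wrk_cat (IHa u) // (IHb v).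
- move=> [Hs Hw] [u [vs [Hu Hr ->]]].
  rewrite wrk_fill; last by rewrite count_None (Hmu _ _ Hu) (rel2_size Hr).
  elim: args vs IH Hw Hr {Hs} => [|a l IHl] [|v vs] //= [Ha Hl] [Hwa Hwl] [Hv Hr].
  by rewrite (Ha v) // IHl.
Qed.


Lemma evalN_ninsert mu w : okmu rkV mu -> nwf w -> forall n j z, nwf n -> 1 <= j <= nrk n ->
  (evalN mu (ninsert j n w) z <->
   exists u v, [/\ evalN mu n u, evalN mu w v & z = ins j u v]).
Proof.
move=> Hmu Hw; elim/nf_ind2 => [s||a b IHa IHb|x args IH] j z /=.
- move=> _; lia.
- move=> _ H. have Ej : j = 1 by lia. subst j. split.
  + move=> Hz. exists [:: None], z; split => //=. by rewrite cats0.
  + by move=> [u [v [-> Hv ->]]] /=; rewrite cats0.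
- move=> [Ha Hb] H. case: ifP => Hj /=.
  + split.
    * move=> [u1 [u2 [Hu1 Hu2 ->]]].
      move/(IHa j u1 Ha): Hu1 => Hu1. have /Hu1 [ua [v [Hua Hv ->]]] : 1 <= j <= nrk a by lia.
      exists (ua ++ u2), v; split => //; first by exists ua, u2.
      rewrite ins_catl // (evalN_rk Hmu Ha Hua) //.
    * move=> [u [v [[ua [ub [Hua Hub ->]]] Hv ->]]].
      rewrite ins_catl; last by rewrite (evalN_rk Hmu Ha Hua).
      exists (ins j ua v), ub; split => //.
      apply/(IHa j _ Ha); first lia. by exists ua, v.
  + split.
    * move=> [u1 [u2 [Hu1 Hu2 ->]]].
      move/(IHb (j - nrk a) u2 Hb): Hu2 => Hu2.
      have /Hu2 [ub [v [Hub Hv ->]]] : 1 <= j - nrk a <= nrk b by lia.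
      exists (u1 ++ ub), v; split => //; first by exists u1, ub.
      rewrite ins_catr (evalN_rk Hmu Ha Hu1) //; lia.
    * move=> [u [v [[ua [ub [Hua Hub ->]]] Hv ->]]].
      rewrite ins_catr (evalN_rk Hmu Ha Hua); last lia.
      exists ua, (ins (j - nrk a) ub v); split => //.
      apply/(IHb _ _ Hb); first lia. by exists ub, v.
- move=> [Hs Hwf] H.
  have key : forall vs', rel2 (evalN mu) (insA ninsert j args w) vs' <->
      exists vs v, [/\ rel2 (evalN mu) args vs, evalN mu w v & vs' = insW j vs v].
    elim: args j {Hs} IH Hwf H => [|a l IHl] j /=; first lia.
    move=> [Ha Hl] [Hwa Hwl] H vs'. case: ifP => Hj.
    - split.
      + case: vs' => [|v1 vs1] //= [Hv1 Hr].
        move/(Ha j v1 Hwa): Hv1 => Hv1. have /Hv1 [ua [v [Hua Hv ->]]] : 1 <= j <= nrk a by lia.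
        exists (ua :: vs1), v; split => //=. by rewrite (evalN_rk Hmu Hwa Hua) Hj.
      + move=> [[|ua vs1] [v [//= [Hua Hr] Hv ->]]] /=.
        rewrite (evalN_rk Hmu Hwa Hua) Hj /=; split => //.
        apply/(Ha j _ Hwa); first lia. by exists ua, v.
    - split.
      + case: vs' => [|v1 vs1] //= [Hv1 Hr].
        move/(IHl (j - nrk a) Hl Hwl): Hr => Hr.
        have /Hr [vs [v [Hr' Hv ->]]] : 1 <= j - nrk a <= sumn (map nrk l) by lia.
        exists (v1 :: vs), v; split => //=. by rewrite (evalN_rk Hmu Hwa Hv1) Hj.
      + move=> [[|ua vs1] [v [//= [Hua Hr] Hv ->]]] /=.
        rewrite (evalN_rk Hmu Hwa Hua) Hj /=; split => //.
        apply/(IHl (j - nrk a) Hl Hwl); first lia. by exists vs1, v.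
  split.
  + move=> [u [vs' [Hu /key [vs [v [Hr Hv ->]]] ->]]].
    exists (ofill u (map Some vs)), v; split => //; first by exists u, vs.
    rewrite ins_fill // count_None (Hmu _ _ Hu) (rel2_size Hr) //.
  + move=> [u' [v [[u [vs [Hu Hr ->]]] Hv ->]]].
    rewrite ins_fill; last by rewrite count_None (Hmu _ _ Hu) (rel2_size Hr).
    exists u, (insW j vs v); split => //. apply/key. by exists vs, v.
Qed.


Lemma ofill_idN (u : word) n : ofill u (map Some (nseq n [:: None])) = u.
Proof.
elim: u n => [|x u IH] n; [|case: x => [a|]] => //=; first by rewrite IH.
by case: n => [|n] /=; rewrite ?ofill0 ?IH.
Qed.

Lemma rel2_None mu r vs : rel2 (evalN mu) (nseq r NOne) vs -> vs = nseq r [:: None].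
Proof. by elim: r vs => [|r IH] [|v vs] //= [-> /IH ->]. Qed.

Lemma rel2_None' mu r : rel2 (evalN mu) (nseq r NOne) (nseq r [:: None]).
Proof. by elim: r. Qed.

Lemma eval_nf mu (e : expr) : okmu rkV mu -> ewf rkV e -> forall z, eval mu e z <-> evalN mu (nf_of e) z.
Proof.
move=> Hmu; elim: e => [x|s||a IHa b IHb|j a IHa b IHb] /= He z.
- split.
  + move=> Hz; exists z, (nseq (rkV x) [:: None]); split => //.
    * exact: rel2_None'.
    * by rewrite ofill_idN.
  + by move=> [u [vs [Hu /rel2_None -> ->]]]; rewrite ofill_idN.
- by [].
- by [].
- case: He => Ha Hb. split.
  + move=> [u [v [Hu Hv ->]]]; exists u, v; split; by [apply/IHa|apply/IHb|].
  + move=> [u [v [Hu Hv ->]]]; exists u, v; split; by [apply/IHa|apply/IHb|].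
- case: He => Hj1 Hj2 Ha Hb.
  rewrite evalN_ninsert //; try exact: nwf_nf; last by rewrite nrk_nf // Hj1.
  split.
  + move=> [u [v [Hu Hv ->]]]; exists u, v; split; by [apply/IHa|apply/IHb|].
  + move=> [u [v [Hu Hv ->]]]; exists u, v; split; by [apply/IHa|apply/IHb|].
Qed.


Definition zo (a : nf) : option expr := if nrk a == 0 then Some (real a) else None.
Definition po (a : nf) : option expr := if nrk a == 0 then None else Some (real a).
Definition qs (args : seq nf) : seq expr := pmap id (map po args).

Lemma real_NX x args :
  real (NX x args) = mk1 (mk1 (@ELeaf Sigma V x) 1 (map zo args)) 1 (map Some (qs args)).
Proof. by []. Qed.

Lemma allP_impl (Q R : nf -> Prop) l : allP (fun a => Q a -> R a) l -> allP Q l -> allP R l.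
Proof. by elim: l => //= a l IH [H1 H2] [H3 H4]; split; auto. Qed.

Lemma size_qs args : size (qs args) = count (fun a => nrk a != 0) args.
Proof. elim: args => //= a l IH; rewrite /qs /po /= in IH *; by case: ifP => _ /=; rewrite IH. Qed.

Lemma og_zo args : allP (fun a => erk rkV (real a) = nrk a) args ->
  sumn (map (og rkV) (map zo args)) = count (fun a => nrk a != 0) args.
Proof.
elim: args => //= a l IH [Ha Hl]. rewrite IH // /zo /og.
case: ifP => E /=; first by rewrite Ha (eqP E).
by rewrite add1n.
Qed.

Lemma og_zo_le args : allP (fun a => erk rkV (real a) = nrk a) args ->
  sumn (map (og rkV) (map zo args)) <= size args.
Proof. move=> H; rewrite og_zo // ; exact: count_size. Qed.

Lemma sum_qs args : allP (fun a => erk rkV (real a) = nrk a) args ->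
  sumn (map (erk rkV) (qs args)) = sumn (map nrk args).
Proof.
elim: args => //= a l IH [Ha Hl]. rewrite /qs /po /=.
case: ifP => E /=; first by rewrite (eqP E) IH.
by rewrite Ha IH.
Qed.

Lemma qs_pos args : allP (fun a => erk rkV (real a) = nrk a) args ->
  all (fun q => 0 < erk rkV q) (qs args).
Proof.
elim: args => //= a l IH [Ha Hl]. rewrite /qs /po /=.
case: ifP => E /=; first exact: IH.
by rewrite Ha IH // andbT lt0n E.
Qed.

Lemma og_Some (l : seq expr) : sumn (map (og rkV) (map Some l)) = sumn (map (erk rkV) l).
Proof. by elim: l => //= a l ->. Qed.

Lemma allO_zo (P : expr -> Prop) args : allP (fun a => P (real a)) args -> allO P (map zo args).
Proof. elim: args => //= a l IH [Ha Hl]; rewrite /zo; case: ifP => _ /=; auto. Qed.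

Lemma allO_qs (P : expr -> Prop) args : allP (fun a => P (real a)) args -> allO P (map Some (qs args)).
Proof. elim: args => //= a l IH [Ha Hl]; rewrite /qs /po /= in IH *; case: ifP => _ /=; auto. Qed.

Lemma erk_real : forall n, nwf n -> erk rkV (real n) = nrk n.
Proof.
elim/nf_ind2 => [s||a b IHa IHb|x args IH] //=.
- by move=> [Ha Hb]; rewrite IHa ?IHb.
- move=> [Hs Hw]. have IH' := allP_impl IH Hw.
  rewrite -/(real (NX x args)) real_NX.
  have Hin : erk rkV (mk1 (@ELeaf Sigma V x) 1 (map zo args)) = count (fun a => nrk a != 0) args.
    rewrite erk_mk1; last by rewrite size_map Hs.
    by rewrite size_map /= Hs subnn add0n og_zo.
  rewrite erk_mk1 Hin; last by rewrite size_map size_qs.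
  by rewrite size_map size_qs subnn add0n og_Some sum_qs.
Qed.

Lemma erk_real_all l : allP nwf l -> allP (fun a => erk rkV (real a) = nrk a) l.
Proof. elim: l => //= a l IH [Ha Hl]; split; auto; exact: erk_real. Qed.

Lemma ewf_real : forall n, nwf n -> ewf rkV (real n).
Proof.
elim/nf_ind2 => [s||a b IHa IHb|x args IH] //=.
- by move=> [Ha Hb]; split; auto.
- move=> [Hs Hw]. have IH' := allP_impl IH Hw.
  have Her := erk_real_all Hw.
  rewrite -/(real (NX x args)) real_NX.
  apply: ewf_mk1.
  + apply: ewf_mk1 => //; first exact: allO_zo. by rewrite size_map /= Hs.
  + exact: allO_qs.
  + rewrite erk_mk1; last by rewrite size_map /= Hs.
    by rewrite !size_map /= Hs subnn add0n og_zo // size_qs.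
Qed.


Lemma ewf_real_all l : allP nwf l -> allP (fun a => ewf rkV (real a)) l.
Proof. elim: l => //= a l IH [Ha Hl]; split; auto; exact: ewf_real. Qed.

Lemma erk_inner x args : size args = rkV x -> allP (fun a => erk rkV (real a) = nrk a) args ->
  erk rkV (mk1 (@ELeaf Sigma V x) 1 (map zo args)) = size (qs args).
Proof.
move=> Hs Her. rewrite erk_mk1; last by rewrite size_map /= Hs.
by rewrite !size_map /= Hs subnn add0n og_zo // size_qs.
Qed.

Lemma allP_drop (P : nf -> Prop) l i : allP P l -> allP P (drop i l).
Proof. elim: l i => [|a l IH] [|i] //= [Ha Hl]; auto. Qed.

Lemma sumn_drop (l : seq expr) i : all (fun q => 0 < erk rkV q) l -> i <= size l ->
  i + sumn (map (erk rkV) (drop i l)) <= sumn (map (erk rkV) l).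
Proof.
elim: l i => [|a l IH] [|i] //= /andP [Ha Hl] Hi.
have := IH i Hl Hi. lia.
Qed.

Lemma sub_real K : forall n, nwf n -> nrk n <= K -> nleaves K n -> subranks_le rkV K (real n).
Proof.
elim/nf_ind2 => [s||a b IHa IHb|x args IH] //=.
- move=> [Ha Hb] H [La Lb]; split => //.
  + by rewrite !erk_real.
  + apply: IHa => //; lia.
  + apply: IHb => //; lia.
- move=> [Hs Hw] H [Lx La].
  have Her := erk_real_all Hw.
  have IHs : allP (fun a => subranks_le rkV K (real a)) args.
    elim: args {Hs Her} IH Hw H La => //= a l IHl [Ha Hl] [Wa Wl] H [La Ll].
    split; first by apply: Ha => //; lia.
    apply: IHl => //; lia.
  rewrite -/(real (NX x args)) real_NX.
  apply: sub_mk1.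
  + apply: sub_mk1 => //.
    * exact: allO_zo.
    * by rewrite size_map /= Hs.
    * move=> i Hi. rewrite -map_drop size_map size_drop /= -Hs.
      have := og_zo_le (allP_drop i Her). rewrite size_drop. lia.
  + exact: allO_qs.
  + by rewrite erk_inner // size_map.
  + move=> i Hi. rewrite erk_inner // -map_drop og_Some size_map size_drop.
    rewrite size_map in Hi.
    have := sumn_drop (qs_pos Her) (ltnW Hi). rewrite sum_qs //. lia.
Qed.


Lemma split_fwd mu args : okmu rkV mu -> allP nwf args ->
  allP (fun a => forall z, eval mu (real a) z <-> evalN mu a z) args ->
  forall ovs1 ovs2, orel (eval mu) (map zo args) ovs1 -> orel (eval mu) (map Some (qs args)) ovs2 ->
  exists vs, [/\ rel2 (evalN mu) args vs, merge ovs1 ovs2 = map Some vs &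
                 forall v, Some v \in ovs1 -> wrk v = 0].
Proof.
move=> Hmu; elim: args => [|a l IH] /=.
- by move=> _ _ [|//] [|//] _ _; exists [::].
- move=> [Wa Wl] [Sa Sl] ovs1 ovs2. rewrite /zo /qs /po /=. case: ifP => E.
  + case: ovs1 => [|[v|] ovs1'] //= [Hv H1] H2.
    have [vs [Hr Hm Hz]] := IH Wl Sl _ _ H1 H2.
    exists (v :: vs); split => /=; first by split => //; apply/Sa.
    * by rewrite Hm.
    * move=> v'; rewrite inE => /orP [/eqP [->]|/Hz //].
      rewrite (evalN_rk Hmu Wa (iffLR (Sa v) Hv)). exact/eqP.
  + case: ovs1 => [|[v|] ovs1'] //= H1.
    case: ovs2 => [|[v|] ovs2'] //= [Hv H2].
    have [vs [Hr Hm Hz]] := IH Wl Sl _ _ H1 H2.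
    exists (v :: vs); split => /=; first by split => //; apply/Sa.
    * by rewrite Hm.
    * move=> v'; rewrite inE => /orP [//|/Hz //].
Qed.

Lemma split_bwd mu args : okmu rkV mu -> allP nwf args ->
  allP (fun a => forall z, eval mu (real a) z <-> evalN mu a z) args ->
  forall vs, rel2 (evalN mu) args vs ->
  exists ovs1 ovs2, [/\ orel (eval mu) (map zo args) ovs1, orel (eval mu) (map Some (qs args)) ovs2,
                 merge ovs1 ovs2 = map Some vs & forall v, Some v \in ovs1 -> wrk v = 0].
Proof.
move=> Hmu; elim: args => [|a l IH] /=.
- by move=> _ _ [|//] _; exists [::], [::].
- move=> [Wa Wl] [Sa Sl] [|v vs] //= [Hv Hr]. rewrite /zo /qs /po /=.
  have [ovs1 [ovs2 [H1 H2 Hm Hz]]] := IH Wl Sl _ Hr.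
  case: ifP => E.
  + exists (Some v :: ovs1), ovs2; split => /=; first by split => //; apply/Sa.
    * by [].
    * by rewrite Hm.
    * move=> v'; rewrite inE => /orP [/eqP [->]|/Hz //].
      rewrite (evalN_rk Hmu Wa Hv). exact/eqP.
  + exists (None :: ovs1), (Some v :: ovs2); split => /=.
    * by [].
    * by split => //; apply/Sa.
    * by rewrite Hm.
    * move=> v'; rewrite inE => /orP [//|/Hz //].
Qed.

Lemma eval_real mu : okmu rkV mu -> forall n, nwf n -> forall z, eval mu (real n) z <-> evalN mu n z.
Proof.
move=> Hmu; elim/nf_ind2 => [s||a b IHa IHb|x args IH] //=.
- move=> [Ha Hb] z. split.
  + move=> [u [v [Hu Hv ->]]]; exists u, v; split; by [apply/IHa|apply/IHb|].
  + move=> [u [v [Hu Hv ->]]]; exists u, v; split; by [apply/IHa|apply/IHb|].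
- move=> [Hs Hw] z. have Sem := allP_impl IH Hw. have Her := erk_real_all Hw.
  have Ein : ewf rkV (mk1 (@ELeaf Sigma V x) 1 (map zo args)).
    apply: ewf_mk1 => //; first exact: allO_zo (ewf_real_all Hw).
    by rewrite size_map /= Hs.
  have Pout : forall w, eval mu (mk1 (@ELeaf Sigma V x) 1 (map zo args)) w ->
      0 + size (map Some (qs args)) <= wrk w.
    by move=> w /(eval_rk Hmu Ein) ->; rewrite erk_inner // size_map.
  have Pin : forall u, eval mu (@ELeaf Sigma V x) u -> 0 + size (map zo args) <= wrk u.
    by move=> u /= /Hmu ->; rewrite size_map Hs.
  rewrite -/(real (NX x args)) real_NX (eval_mk1 _ Pout). split.
  + move=> [w [ovs2 [/(eval_mk1 _ Pin) [u [ovs1 [Hu H1 ->]]] H2 ->]]].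
    have [vs [Hr Hm Hz]] := split_fwd Hmu Hw Sem H1 H2.
    exists u, vs; split => //. by rewrite /= ofill_merge // Hm.
  + move=> [u [vs [Hu Hr ->]]].
    have [ovs1 [ovs2 [H1 H2 Hm Hz]]] := split_bwd Hmu Hw Sem Hr.
    exists (ofill u ovs1), ovs2; split => //.
    * apply/(eval_mk1 _ Pin). by exists u, ovs1.
    * by rewrite /= ofill_merge // Hm.
Qed.

End NF.

Section Final.
Variable Sigma : finType.

Lemma core (V : Type) (rkV : V -> nat) k (e : expr Sigma V) :
  ewf rkV e -> erk rkV e < k -> leaves_rank_lt rkV k e ->
  exists e', [/\ ewf rkV e', subranks_le rkV k e' &
    forall mu, okmu rkV mu -> forall z, eval mu e z <-> eval mu e' z].
Proof.
move=> Hw Hr Hl. exists (real (nf_of rkV e)); split.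
- apply: ewf_real; exact: nwf_nf.
- apply: sub_real; first exact: nwf_nf.
  + rewrite nrk_nf //; lia.
  + exact: nleaves_nf.
- move=> mu Hmu z. rewrite (eval_nf Hmu Hw). symmetry. apply: (eval_real Hmu). exact: nwf_nf.
Qed.

Lemma emap_comp (U V W : Type) (f : V -> W) (g : U -> V) (D : expr Sigma U) :
  emap f (emap g D) = emap (f \o g) D.
Proof. by elim: D => //= [a -> b ->|j a -> b ->]. Qed.

Lemma emap_ext (V W : Type) (f g : V -> W) (D : expr Sigma V) :
  (forall x, f x = g x) -> emap f D = emap g D.
Proof. by move=> H; elim: D => //= [x|a -> b ->|j a -> b ->]; rewrite ?H. Qed.

Lemma emap_id (V : Type) (D : expr Sigma V) : emap id D = D.
Proof. by elim: D => //= [a -> b ->|j a -> b ->]. Qed.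

Lemma label (N : Type) (e : expr Sigma N) :
  exists s (A : 'I_s -> N) (D : expr Sigma 'I_s), e = emap A D.
Proof.
have A0 : 'I_0 -> N by case => m; rewrite ltn0.
have comb : forall s1 s2 (A1 : 'I_s1 -> N) (A2 : 'I_s2 -> N) (D1 : expr Sigma 'I_s1) (D2 : expr Sigma 'I_s2),
   exists A : 'I_(s1 + s2) -> N, emap A (emap (lshift s2) D1) = emap A1 D1 /\
                                   emap A (emap (@rshift s1 s2) D2) = emap A2 D2.
  move=> s1 s2 A1 A2 D1 D2.
  exists (fun i => match split i with inl i1 => A1 i1 | inr i2 => A2 i2 end).
  rewrite !emap_comp; split; apply: emap_ext => i /=.
  + by rewrite (unsplitK (inl i)).
  + by rewrite (unsplitK (inr i)).
elim: e => [x|w||a IHa b IHb|j a IHa b IHb].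
- by exists 1, (fun _ => x), (ELeaf Sigma ord0).
- by exists 0, A0, (EWord _ w).
- by exists 0, A0, (EOne Sigma _).
- have [s1 [A1 [D1 ->]]] := IHa; have [s2 [A2 [D2 ->]]] := IHb.
  have [A [E1 E2]] := comb _ _ A1 A2 D1 D2.
  exists (s1 + s2), A, (ECat (emap (lshift s2) D1) (emap (@rshift s1 s2) D2)).
  by rewrite /= E1 E2.
- have [s1 [A1 [D1 ->]]] := IHa; have [s2 [A2 [D2 ->]]] := IHb.
  have [A [E1 E2]] := comb _ _ A1 A2 D1 D2.
  exists (s1 + s2), A, (EIns j (emap (lshift s2) D1) (emap (@rshift s1 s2) D2)).
  by rewrite /= E1 E2.
Qed.

Lemma erk_emap (V W : Type) (rkW : W -> nat) (f : V -> W) (D : expr Sigma V) :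
  erk rkW (emap f D) = erk (fun x => rkW (f x)) D.
Proof. by elim: D => //= [a -> b ->|j a -> b ->]. Qed.

Lemma ewf_emap (V W : Type) (rkW : W -> nat) (f : V -> W) (D : expr Sigma V) :
  ewf rkW (emap f D) <-> ewf (fun x => rkW (f x)) D.
Proof.
elim: D => //= [a IHa b IHb|j a IHa b IHb].
- by rewrite IHa IHb.
- rewrite erk_emap. split => -[H1 H2 Ha Hb]; split => //; by [apply/IHa|apply/IHb].
Qed.

Lemma sub_emap (V W : Type) (rkW : W -> nat) (f : V -> W) k (D : expr Sigma V) :
  subranks_le rkW k (emap f D) <-> subranks_le (fun x => rkW (f x)) k D.
Proof.
elim: D => //= [a IHa b IHb|j a IHa b IHb]; rewrite ?erk_emap //;
  split => -[H1 Ha Hb]; split => //; by [apply/IHa|apply/IHb].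
Qed.

Lemma leaves_emap (V W : Type) (rkW : W -> nat) (f : V -> W) k (D : expr Sigma V) :
  leaves_rank_lt rkW k (emap f D) <-> leaves_rank_lt (fun x => rkW (f x)) k D.
Proof. by elim: D => //= [a IHa b IHb|j a IHa b IHb]; rewrite IHa IHb. Qed.

End Final.

Unset Implicit Arguments.

Theorem corollary1 (Sigma : finType) (N : Type) (rkN : N -> nat) (k : nat)
  (alpha : term Sigma N) :
  k_essential rkN k alpha ->
  exists alpha' : term Sigma N, k_correct rkN k alpha' /\ term_equiv rkN alpha alpha'.
Proof.
move=> [Hw Hr Hl].
have [s [A [D1 E]]] := label alpha. subst alpha.
move/ewf_emap: Hw => Hw. rewrite erk_emap in Hr. move/leaves_emap: Hl => Hl.
have [D2 [Hw2 Hs2 Heq]] := core Hw Hr Hl.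
exists (emap A D2); split.
- split; [exact/ewf_emap | exact/sub_emap].
- exists s, A, D1, D2; split => //; split => //; split => //.
Qed.
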